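(* Let $(\mathcal A,p_n)$ be a Fréchet algebra and $I$ a closed ideal of $\mathcal A$. Let $\mathcal A=\varprojlim\mathcal A_n$ be an Arens–Michael decomposition of $\mathcal A$ and $I=\varprojlim\overline{I_n}$ the corresponding Arens–Michael decomposition of $I$, where $I_n=\varphi_n(I)$. Then $\mathcal A$ has a locally bounded approximate identity modulo $I$ if and only if each Banach algebra $\mathcal A_n$ has a bounded approximate identity modulo $\overline{I_n}$.
   Context: A Fréchet algebra $(\mathcal A,p_n)$ is a complete topological algebra whose topology is given by a countable increasing family of submultiplicative seminorms. Arens–Michael decomposition: $\mathcal A_n$ is the completion of the normed algebra $\mathcal A/\ker p_n$ with $\|a+\ker p_n\|_n=p_n(a)$, $\varphi_n:\mathcal A\to\mathcal A_n$ the canonical map $a\mapsto a+\ker p_n$, and $\mathcal A$ is identified with the inverse limit of the $\mathcal A_n$ under the natural linking maps; $\overline{I_n}$ is the closure of $\varphi_n(I)$ in $\mathcal A_n$. $\mathcal A$ has a locally bounded approximate identity modulo $I$ if there is a family $\{C_n\}$ of positive reals such that for each finite $F\subseteq\mathcal A\setminus I$, each $n$ and each $\varepsilon>0$ there is $b\in\mathcal A$ with $p_n(b)\le C_n$, $p_n(ab-a)<\varepsilon$, $p_n(ba-a)<\varepsilon$ for all $a\in F$. A Banach algebra $\mathcal B$ has a bounded approximate identity modulo a closed ideal $J$ if there is a bounded net $(u_\alpha)$ with $u_\alpha b\to b$ and $bu_\alpha\to b$ for all $b\in\mathcal B\setminus J$. *)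

(* Defs.v *)
From HB Require Import structures.
From mathcomp Require Import all_boot all_order all_algebra.
From mathcomp Require Import all_classical all_reals all_analysis.
From mathcomp Require Export complex.

Set Implicit Arguments.
Unset Strict Implicit.
Unset Printing Implicit Defensive.

Import Order.TTheory GRing.Theory Num.Theory.
Import numFieldNormedType.Exports.
Local Open Scope classical_set_scope.
Local Open Scope ring_scope.

(* Algebras are NOT
   assumed unital: an algebra is a K-module with an explicit bilinear
   associative multiplication. *)

Definition is_algebra_mul (K : numFieldType) (A : lmodType K) (mul : A -> A -> A) : Prop :=
  [/\ (forall a b c : A, mul (a + b) c = mul a c + mul b c),
      (forall a b c : A, mul a (b + c) = mul a b + mul a c),
      (forall (k : K) (a b : A), mul (k *: a) b = k *: mul a b),
      (forall (k : K) (a b : A), mul a (k *: b) = k *: mul a b)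
    & (forall a b c : A, mul a (mul b c) = mul (mul a b) c)].

Definition is_frechet_algebra (K : numFieldType) (A : lmodType K)
    (mul : A -> A -> A) (p : nat -> A -> K) : Prop :=
  [/\ is_algebra_mul mul,
      (forall n a, 0 <= p n a) /\
      (forall n a b, p n (a + b) <= p n a + p n b) /\
      (forall n (k : K) a, p n (k *: a) = `|k| * p n a),
      (forall n a b, p n (mul a b) <= p n a * p n b),
      (forall n a, p n a <= p n.+1 a) /\
      (forall a, (forall n, p n a = 0) -> a = 0)
    &
      (forall u : nat -> A,
        (forall n (eps : K), 0 < eps -> exists N, forall i j,
            (N <= i)%N -> (N <= j)%N -> p n (u i - u j) < eps) ->
        exists l : A, forall n (eps : K), 0 < eps -> exists N, forall i,
            (N <= i)%N -> p n (u i - l) < eps)].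

(** Closedness is
    w.r.t. the topology of the seminorms: every point of the closure
    (every neighbourhood {x | p n (a - x) < eps} meets I) lies in I. *)
Definition is_closed_ideal (K : numFieldType) (A : lmodType K)
    (mul : A -> A -> A) (p : nat -> A -> K) (I : set A) : Prop :=
  [/\ I 0,
      (forall a b, I a -> I b -> I (a + b)),
      (forall (k : K) a, I a -> I (k *: a)),
      (forall a x, I x -> I (mul a x) /\ I (mul x a))
    & (forall a, (forall n (eps : K), 0 < eps -> exists x, I x /\ p n (a - x) < eps) -> I a)].

Definition is_banach_algebra (K : numFieldType) (B : completeNormedModType K)
    (mulB : B -> B -> B) : Prop :=
  is_algebra_mul mulB /\ (forall x y : B, `|mulB x y| <= `|x| * `|y|).

(** Arens–Michael component: (B, phi) is (isometrically isomorphic to) the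
    completion A_n of the normed algebra A / ker p_n with norm
    ||a + ker p_n|| = p_n(a), phi being the canonical map a |-> a + ker p_n. *)
Definition is_AM_component (K : numFieldType) (A : lmodType K)
    (mul : A -> A -> A) (p : nat -> A -> K) (n : nat)
    (B : completeNormedModType K) (mulB : B -> B -> B) (phi : A -> B) : Prop :=
  [/\ is_banach_algebra mulB,
      (forall a b, phi (a + b) = phi a + phi b) /\
      (forall (k : K) a, phi (k *: a) = k *: phi a),
      (forall a b, phi (mul a b) = mulB (phi a) (phi b)),
      (forall a, `|phi a| = p n a)
    & (forall (b : B) (eps : K), 0 < eps -> exists a, `|b - phi a| < eps)].

Definition has_lbai_mod (K : numFieldType) (A : lmodType K)
    (mul : A -> A -> A) (p : nat -> A -> K) (I : set A) : Prop :=
  exists C : nat -> K, (forall n, 0 < C n) /\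
    forall (F : seq A), (forall a, a \in F -> ~ I a) ->
    forall n (eps : K), 0 < eps ->
    exists b : A, p n b <= C n /\
      forall a, a \in F -> p n (mul a b - a) < eps /\ p n (mul b a - a) < eps.

Definition directed_set (D : Type) (le : D -> D -> Prop) : Prop :=
  [/\ inhabited D,
      (forall d, le d d),
      (forall d1 d2 d3, le d1 d2 -> le d2 d3 -> le d1 d3)
    & (forall d1 d2, exists d3, le d1 d3 /\ le d2 d3)].

Definition has_bai_mod (K : numFieldType) (B : completeNormedModType K)
    (mulB : B -> B -> B) (J : set B) : Prop :=
  exists (D : Type) (le : D -> D -> Prop) (u : D -> B) (M : K),
    directed_set le /\ (forall d, `|u d| <= M) /\
    forall b : B, ~ J b -> forall eps : K, 0 < eps ->
      exists d0, forall d, le d0 d ->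
        `|mulB (u d) b - b| < eps /\ `|mulB b (u d) - b| < eps.

(* Main.v *)
Require Import Defs.
From HB Require Import structures.
From mathcomp Require Import all_boot all_order all_algebra.
From mathcomp Require Import all_classical all_reals all_analysis.
From mathcomp Require Import complex.
Import Order.TTheory GRing.Theory Num.Theory.
Import numFieldNormedType.Exports.
Local Open Scope classical_set_scope.
Local Open Scope ring_scope.

Lemma zm_id1 (V : zmodType) (x y z : V) : y - z = (x - z) - (x - y).
Proof. by rewrite opprB [RHS]addrC -addrA addKr. Qed.

Lemma zm_id2 (V : zmodType) (x y z w : V) : x - w = (x - y) + (y - z) + (z - w).
Proof. by rewrite !addrA subrK subrK. Qed.

Lemma zm_id3 (V : zmodType) (a c x1 x2 : V) : c - (x1 - x2) = (a + c - x1) - (a - x2).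
Proof. by rewrite !opprB -addrA addrC -!addrA addrC !addrA addrNK [x2 + c]addrC. Qed.

Lemma zm_id4 (V : zmodType) (x y z w : V) : (x - z) - (y - w) = (x - y) - (z - w).
Proof. by rewrite !opprB !addrA [LHS]addrAC [x - z - y]addrAC [RHS]addrAC. Qed.

Lemma pos_min (K : numDomainType) (x y : K) : 0 < x -> 0 < y ->
  exists z, [/\ 0 < z, z <= x & z <= y].
Proof.
move=> hx hy; have := real_leVge (gtr0_real hx) (gtr0_real hy).
by case/orP => h; [exists x | exists y]; split.
Qed.

Lemma mulB_subr (K : numFieldType) (A : lmodType K) (m : A -> A -> A) :
  is_algebra_mul m -> forall x y z, m x (y - z) = m x y - m x z.
Proof.
case=> _ h2 _ h4 _ x y z; rewrite h2 -scaleN1r h4 scaleN1r //.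
Qed.

Lemma mulB_subl (K : numFieldType) (A : lmodType K) (m : A -> A -> A) :
  is_algebra_mul m -> forall x y z, m (y - z) x = m y x - m z x.
Proof.
case=> h1 _ h3 _ _ x y z; rewrite h1 -scaleN1r h3 scaleN1r //.
Qed.

Lemma phi_sub (K : numFieldType) (A : lmodType K) (B : lmodType K) (phi : A -> B) :
  (forall a b, phi (a + b) = phi a + phi b) /\
  (forall (k : K) a, phi (k *: a) = k *: phi a) ->
  forall a b, phi (a - b) = phi a - phi b.
Proof. by case=> h1 h2 a b; rewrite h1 -scaleN1r h2 scaleN1r. Qed.

Lemma small_eta (K : numFieldType) (A : eqType) (f : A -> K) (e : K) :
  (forall a, 0 <= f a) -> 0 < e -> forall F : seq A,
  exists eta, [/\ 0 < eta, eta <= 1 & forall a, a \in F -> f a * eta < e].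
Proof.
move=> f0 e0; elim=> [|a F [eta [eta0 eta1 Heta]]].
  by exists 1; split => //; rewrite ltr01.
have fa1 : 0 < f a + 1 by rewrite ltr_wpDl ?ltr01.
have e2 : 0 < e / (f a + 1) by rewrite divr_gt0.
have [z [z0 z1 z2]] := pos_min _ _ _ eta0 e2.
exists z; split => //; first exact: le_trans z1 eta1.
move=> x; rewrite in_cons => /orP [/eqP ->|xF].
  apply: (@le_lt_trans _ _ (f a * (e / (f a + 1)))).
    by rewrite ler_wpM2l.
  rewrite mulrA ltr_pdivrMr // [e * _]mulrC ltr_pM2r //.
  by rewrite ltrDl ltr01.
apply: le_lt_trans (Heta x xF); by rewrite ler_wpM2l.
Qed.

Theorem corollary3p9 (R : realType) (A : lmodType R[i])
    (mul : A -> A -> A) (p : nat -> A -> R[i]) (I : set A)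
    (B : nat -> completeNormedModType R[i])
    (mulB : forall n, B n -> B n -> B n)
    (phi : forall n, A -> B n) :
  is_frechet_algebra mul p ->
  is_closed_ideal mul p I ->
  (forall n, is_AM_component mul p n (mulB n) (phi n)) ->
  (has_lbai_mod mul p I <->
   forall n, has_bai_mod (mulB n) (closure (phi n @` I))).
Proof.
move=> [Hmul [Hp0 [HpD HpZ]] Hpmul [Hmono Hhaus] Hcomp].
move=> [I0 ID IZ Imul Iclosed] HAM.
have phiS n : forall a b, phi n (a - b) = phi n a - phi n b.
  by case: (HAM n) => _ hl _ _ _; exact: phi_sub hl.
have Hnorm n a : `|phi n a| = p n a by case: (HAM n).
have HmulB n : is_algebra_mul (mulB n) by case: (HAM n) => [[]].
have HBn n (x y : B n) : `|mulB n x y| <= `|x| * `|y| by case: (HAM n) => [[]].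
have Hphim n a b : phi n (mul a b) = mulB n (phi n a) (phi n b) by case: (HAM n).
have Hdense n : forall (b : B n) (eps : R[i]), 0 < eps -> exists a, `|b - phi n a| < eps.
  by case: (HAM n).
have pmono m k a : p m a <= p (m + k)%N a.
  elim: k => [|k IH]; first by rewrite addn0.
  by apply: le_trans IH _; rewrite addnS.
have pmono' m N a : (m <= N)%N -> p m a <= p N a.
  by move=> hmN; rewrite -(subnKC hmN).
have p0 n : p n 0 = 0.
  by rewrite -(scale0r (0 : A)) HpZ normr0 mul0r.
have pN n a : p n (- a) = p n a.
  by rewrite -scaleN1r HpZ normrN normr1 mul1r.
split.
- move=> [C [C0 HC]] n.
  pose filt (F : seq A) := [seq a <- F | `[< ~ I a >]].
  have filtP F : forall a, a \in filt F -> ~ I a.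
    by move=> a; rewrite mem_filter => /andP [/asboolP].
  pose D := (seq A * {e : R[i] | 0 < e})%type.
  have Hex : forall d : D, exists b, p n b <= C n /\ forall a, a \in filt d.1 ->
      p n (mul a b - a) < sval d.2 /\ p n (mul b a - a) < sval d.2.
    by move=> d; apply: HC; [exact: filtP | exact: (svalP d.2)].
  have [g Hg] := choice Hex.
  exists D, (fun d1 d2 : D => (forall x, x \in d1.1 -> x \in d2.1) /\ sval d2.2 <= sval d1.2).
  exists (fun d => phi n (g d)), (C n).
  split; [|split].
  + split.
    * by constructor; exact: ([::], exist _ 1 ltr01).
    * by move=> d; split.
    * move=> d1 d2 d3 [h1 h1'] [h2 h2']; split; first by move=> x /h1 /h2.
      exact: le_trans h2' h1'.
    * move=> [F1 [e1 he1]] [F2 [e2 he2]].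
      have [z [z0 z1 z2]] := pos_min _ _ _ he1 he2.
      exists (F1 ++ F2, exist _ z z0) => /=.
      by split; split => // x hx; rewrite mem_cat hx ?orbT.
  + by move=> d; rewrite Hnorm; case: (Hg d).
  + move=> b Hb eps eps0.
    have [r [r0 Hr]] : exists r, 0 < r /\ forall a, `|b - phi n a| < r -> ~ I a.
      apply: contrapT => Hno; apply: Hb => S /nbhs_ballP [r r0 HrS].
      have : ~ (forall a, `|b - phi n a| < r -> ~ I a).
        by move=> H; apply: Hno; exists r.
      move=> /existsNP [a /not_implyP [ha /contrapT Ia]].
      exists (phi n a); split; first by exists a.
      by apply: HrS; rewrite -ball_normE /=.
    have C10 : 0 < C n + 1 by rewrite ltr_wpDl ?ltr01 // ltW.
    have e20 : 0 < eps / 2 by rewrite divr_gt0 // ltr0Sn.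
    have eta00 : 0 < eps / 2 / (C n + 1) by rewrite divr_gt0.
    have [eta [eta0 etar etae]] := pos_min _ _ _ r0 eta00.
    have [a Ha] := Hdense n b eta eta0.
    have nIa : ~ I a by apply: Hr; exact: lt_le_trans Ha etar.
    exists ([:: a], exist _ (eps / 2) e20) => d [/= Hsub Hle].
    have aF : a \in filt d.1 by rewrite mem_filter (Hsub a (mem_head _ _)) andbT; apply/asboolP.
    have [Hgb Hga] := Hg d.
    have [Hga1 Hga2] := Hga a aF.
    have Hud : `|phi n (g d)| <= C n by rewrite Hnorm.
    have key : forall X Y Z : R[i], X <= C n * `|b - phi n a| -> Y < sval d.2 ->
        Z = `|b - phi n a| -> X + Y + Z < eps.
      move=> X Y Z hX hY ->.
      rewrite [X + Y]addrC -addrA (splitr eps).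
      apply: ltr_leD; first exact: lt_le_trans hY Hle.
      apply: (@le_trans _ _ ((C n + 1) * `|b - phi n a|)).
        by rewrite mulrDl mul1r lerD.
      apply: (@le_trans _ _ ((C n + 1) * (eps / 2 / (C n + 1)))).
        by apply: ler_wpM2l; [exact: ltW | exact: le_trans (ltW Ha) etae].
      by rewrite mulrC divfK // gt_eqF.
    split.
    * rewrite (zm_id2 _ _ (mulB n (phi n (g d)) (phi n a)) (phi n a)).
      apply: le_lt_trans (ler_normD _ _) _.
      apply: le_lt_trans (lerD (ler_normD _ _) (lexx _)) _.
      apply: key.
      -- rewrite -mulB_subr //; apply: le_trans (HBn _ _ _) _.
         by rewrite ler_wpM2r.
      -- by rewrite -Hphim -phiS Hnorm.
      -- by rewrite -normrN opprB.
    * rewrite (zm_id2 _ _ (mulB n (phi n a) (phi n (g d))) (phi n a)).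
      apply: le_lt_trans (ler_normD _ _) _.
      apply: le_lt_trans (lerD (ler_normD _ _) (lexx _)) _.
      apply: key.
      -- rewrite -mulB_subl //; apply: le_trans (HBn _ _ _) _.
         by rewrite mulrC ler_wpM2r.
      -- by rewrite -Hphim -phiS Hnorm.
      -- by rewrite -normrN opprB.
- move=> Hbai.
  have [Hall|[c Ic]] : (forall a, I a) \/ exists c, ~ I c.
    case: (pselect (exists c, ~ I c)) => [h|h]; [by right|left].
    by move=> a; apply: contrapT => Ia; apply: h; exists a.
    exists (fun _ => 1); split => [n|F HF n eps eps0]; first exact: ltr01.
    exists 0; split; first by rewrite p0 ler01.
    by move=> a /HF; move: (Hall a).
  pose Cl N a := forall eps : R[i], 0 < eps -> exists x, I x /\ p N (a - x) < eps.
  have [m Hm] : exists m, ~ Cl m c.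
    apply: contrapT => h; apply: Ic; apply: Iclosed => k.
    by apply: contrapT => hk; apply: h; exists k.
  have L1 N a : ~ Cl N a -> ~ closure (phi N @` I) (phi N a).
    move=> hCl hc; apply: hCl => eps eps0.
    have [y [[x Ix <-] Hy]] := hc _ (nbhsx_ballx _ _ eps0).
    exists x; split => //; move: Hy; rewrite -ball_normE /=.
    by rewrite -phiS Hnorm.
  have L2 N a : Cl N (a + c) -> Cl N a -> Cl N c.
    move=> h1 h2 eps eps0.
    have e20 : 0 < eps / 2 by rewrite divr_gt0 // ltr0Sn.
    have [x1 [Ix1 H1]] := h1 _ e20.
    have [x2 [Ix2 H2]] := h2 _ e20.
    exists (x1 - x2); split; first by apply: ID => //; rewrite -scaleN1r; apply: IZ.
    rewrite (zm_id3 _ a); apply: le_lt_trans (HpD _ _ _) _.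
    by rewrite pN (splitr eps) ltrD.
  have Clmono N a : (m <= N)%N -> Cl N a -> Cl m a.
    move=> hmN h eps eps0; have [x [Ix Hx]] := h _ eps0.
    by exists x; split => //; apply: le_lt_trans (pmono' _ _ _ hmN) Hx.
  have Q n : exists M : R[i], 0 < M /\ forall (F : seq A) eps, 0 < eps ->
      exists b, p n b <= M /\ forall a, a \in F ->
        p n (mul a b - a) < eps /\ p n (mul b a - a) < eps.
    pose N := maxn n m.
    have hnN : (n <= N)%N := leq_maxl n m.
    have hmN : (m <= N)%N := leq_maxr n m.
    have [D [le [u [M [[[d00] Hrefl Htrans Hup] [Hbnd Hconv]]]]]] := Hbai N.
    have ncN : ~ Cl N c by move=> h; apply: Hm; exact: Clmono h.
    have Hconv' : forall a eps, 0 < eps -> exists d0, forall d, le d0 d ->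
        `|mulB N (u d) (phi N a) - phi N a| < eps /\
        `|mulB N (phi N a) (u d) - phi N a| < eps.
      move=> a eps eps0.
      case: (pselect (Cl N a)) => hCa; last exact: Hconv (L1 _ _ hCa) _ eps0.
      have hCac : ~ Cl N (a + c) by move=> h; exact: ncN (L2 _ _ h hCa).
      have e20 : 0 < eps / 2 by rewrite divr_gt0 // ltr0Sn.
      have [d1 H1] := Hconv _ (L1 _ _ hCac) _ e20.
      have [d2 H2] := Hconv _ (L1 _ _ ncN) _ e20.
      have [d3 [h13 h23]] := Hup d1 d2.
      exists d3 => d hd.
      have [H1a H1b] := H1 d (Htrans _ _ _ h13 hd).
      have [H2a H2b] := H2 d (Htrans _ _ _ h23 hd).
      have ea : phi N a = phi N (a + c) - phi N c by rewrite -phiS addrK.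
      rewrite ea (mulB_subr _ _ _ (HmulB N)) (mulB_subl _ _ _ (HmulB N)) (splitr eps).
      by split; rewrite zm_id4; apply: le_lt_trans (ler_normB _ _) _; exact: ltrD.
    have HF : forall (F : seq A) eps, 0 < eps -> exists d0, forall d, le d0 d ->
        forall a, a \in F ->
        `|mulB N (u d) (phi N a) - phi N a| < eps /\
        `|mulB N (phi N a) (u d) - phi N a| < eps.
      elim=> [|a F IH] eps eps0; first by exists d00.
      have [d1 H1] := IH _ eps0.
      have [d2 H2] := Hconv' a _ eps0.
      have [d3 [h13 h23]] := Hup d1 d2.
      exists d3 => d hd x; rewrite in_cons => /orP [/eqP ->|xF].
        exact: H2 (Htrans _ _ _ h23 hd).
      exact: H1 (Htrans _ _ _ h13 hd) x xF.
    have M0 : 0 <= M := le_trans (normr_ge0 (u d00)) (Hbnd d00).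
    exists (M + 1); split; first by rewrite ltr_wpDl ?ltr01.
    move=> F eps eps0.
    have e20 : 0 < eps / 2 by rewrite divr_gt0 // ltr0Sn.
    have [d Hd] := HF F _ e20.
    have [eta [eta0 eta1 Heta]] := small_eta _ _ (p N) _ (Hp0 N) e20 F.
    have [b Hb] := Hdense N (u d) eta eta0.
    exists b; split.
      apply: le_trans (pmono' _ _ _ hnN) _; rewrite -Hnorm.
      have -> : phi N b = u d - (u d - phi N b) by rewrite opprB addrC subrK.
      apply: le_trans (ler_normB _ _) _.
      exact: lerD (Hbnd d) (le_trans (ltW Hb) eta1).
    move=> a aF; have [Ha1 Ha2] := Hd d (Hrefl d) a aF.
    have Hsm : forall x : B N, `|x| <= p N a * `|u d - phi N b| -> `|x| < eps / 2.
      move=> x hx; apply: le_lt_trans hx _; apply: le_lt_trans (Heta a aF).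
      by apply: ler_wpM2l => //; exact: ltW.
    split; apply: le_lt_trans (pmono' _ _ _ hnN) _; rewrite -Hnorm phiS Hphim.
    + rewrite (zm_id1 _ (mulB N (phi N a) (u d))); apply: le_lt_trans (ler_normB _ _) _.
      rewrite (splitr eps) ltrD // Hsm // -(mulB_subr _ _ _ (HmulB N)).
      by apply: le_trans (HBn _ _ _) _; rewrite Hnorm.
    + rewrite (zm_id1 _ (mulB N (u d) (phi N a))); apply: le_lt_trans (ler_normB _ _) _.
      rewrite (splitr eps) ltrD // Hsm // -(mulB_subl _ _ _ (HmulB N)).
      by apply: le_trans (HBn _ _ _) _; rewrite Hnorm mulrC.
  have [C HC] := choice Q.
  exists C; split => [n|F _ n eps eps0]; first by case: (HC n).
  by case: (HC n) => _ h; apply: h.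
Qed.
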